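(* Let $m\ge 1$ and $s\in\{-,+\}$, and let $s'$ denote the opposite sign. For every polynomial $\hat\phi^s\in\mathbb{P}_m$, considered on $\hat K_F^s$, there exists a unique polynomial $\hat\phi^{s'}\in\mathbb{P}_m$, considered on $\hat K_F^{s'}$, such that the piecewise function $$\hat\phi(\eta,\xi)=\begin{cases}\hat\phi^-(\eta,\xi),&(\eta,\xi)\in\hat K_F^-,\\ \hat\phi^+(\eta,\xi),&(\eta,\xi)\in\hat K_F^+\end{cases}$$ satisfies the interface conditions (C1), (C2) and (C3).
   Context: Frenet coordinates $(\eta,\xi)$; $\mathbb{P}_m$ denotes bivariate polynomials of total degree at most $m$. The set $\hat K_F$ is a bounded region of the $(\eta,\xi)$-plane that is cut by the line $\eta=0$ into $\hat K_F^-=\hat K_F\cap\{\eta<0\}$ and $\hat K_F^+=\hat K_F\cap\{\eta>0\}$. The interface segment is $\hat\Gamma_{K_F}=\{(0,\xi):\xi_0\le\xi\le\xi_1\}\subset\overline{\hat K_F}$ with $\xi_0<\xi_1$. The coefficient $\hat\beta$ equals the positive constant $\beta^-$ on $\hat K_F^-$ and the positive constant $\beta^+$ on $\hat K_F^+$. For a function $\hat w$ that is smooth up to $\eta=0$ from each side, its jump is $[\![\hat w]\!]_{\hat\Gamma_{K_F}}(\xi)=\hat w^+(0,\xi)-\hat w^-(0,\xi)$, where $\hat w^\pm$ are the restrictions of $\hat w$ to $\hat K_F^\pm$. The operator $\mathscr{L}$ is the transformed Laplacian $$\mathscr{L}(\hat u)=\hat u_{\eta\eta}+J_0(\eta,\xi)\hat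 u_{\xi\xi}+J_1(\eta,\xi)\hat u_\eta+J_2(\eta,\xi)\hat u_\xi .$$ Here $J_0,J_1,J_2$ are fixed smooth real-valued functions on $\overline{\hat K_F}$ determined by the geometry (curvature and parametrization) of the interface curve; they are the same on both sides of $\eta=0$. A piecewise function $\hat u$ with $\hat u|_{\hat K_F^\pm}\in\mathbb{P}_m$ satisfies the interface conditions if: - (C1) $[\![\hat u]\!]_{\hat\Gamma_{K_F}}=0$ for all $\xi\in[\xi_0,\xi_1]$; - (C2) $[\![\hat\beta\,\hat u_\eta]\!]_{\hat\Gamma_{K_F}}=0$ for all $\xi\in[\xi_0,\xi_1]$; - (C3) for every $j=0,1,\dots,m-2$ and every $\hat v\in\mathbb{P}_{m-2-j}(\hat\Gamma_{K_F})$, $$\int_{\xi_0}^{\xi_1}\hat v(\xi)\,[\![\hat\beta\,\partial_\eta^j\mathscr{L}(\hat u)]\!]_{\hat\Gamma_{K_F}}(\xi)\,d\xi=0.$$ Condition (C3) is vacuous when $m=1$. *)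

(* Defs.v *)
From Stdlib Require Import Reals.
From Coquelicot Require Import Coquelicot.
Open Scope R_scope.

(* Functions of two real variables are written  f eta xi  (Frenet coordinates). *)

Definition continuous2 (f : R -> R -> R) : Prop :=
  forall x y : R, continuous (fun p : R * R => f (fst p) (snd p)) (x, y).

Definition d_eta (f : R -> R -> R) : R -> R -> R :=
  fun e x => Derive (fun t => f t x) e.
Definition d_xi (f : R -> R -> R) : R -> R -> R :=
  fun e x => Derive (fun t => f e t) x.

Fixpoint Ck (n : nat) (f : R -> R -> R) : Prop :=
  match n with
  | O => continuous2 f
  | S n' =>
      continuous2 f /\
      (forall e x, ex_derive (fun t => f t x) e) /\
      (forall e x, ex_derive (fun t => f e t) x) /\
      Ck n' (d_eta f) /\ Ck n' (d_xi f)
  end.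

Definition smooth2 (f : R -> R -> R) : Prop := forall n, Ck n f.

Definition is_poly2 (m : nat) (f : R -> R -> R) : Prop :=
  exists c : nat -> nat -> R, forall e x : R,
    f e x = sum_f_R0 (fun a => sum_f_R0 (fun b =>
              if (a + b <=? m)%nat then c a b * e ^ a * x ^ b else 0) m) m.

Definition is_poly1 (k : nat) (v : R -> R) : Prop :=
  exists c : nat -> R, forall x : R, v x = sum_f_R0 (fun a => c a * x ^ a) k.

Definition Lop (J0 J1 J2 : R -> R -> R) (u : R -> R -> R) : R -> R -> R :=
  fun e x =>
    Derive_n (fun t => u t x) 2 e + J0 e x * Derive_n (fun t => u e t) 2 x
    + J1 e x * Derive (fun t => u t x) e + J2 e x * Derive (fun t => u e t) x.

(* A piecewise function is given by its two pieces um (on eta<0) and up (on eta>0);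
   the jump across eta = 0 of beta * w(u), where w(u) is a quantity computed from
   the piece u on each side, evaluated at (0, xi). *)
Definition jump_beta (betam betap : R) (w : (R -> R -> R) -> R -> R -> R)
  (um up : R -> R -> R) (x : R) : R :=
  betap * w up 0 x - betam * w um 0 x.

Definition interface_conds (m : nat) (xi0 xi1 betam betap : R)
  (J0 J1 J2 : R -> R -> R) (um up : R -> R -> R) : Prop :=
  (forall x, xi0 <= x <= xi1 -> up 0 x - um 0 x = 0) /\
  (forall x, xi0 <= x <= xi1 ->
     jump_beta betam betap (fun u => d_eta u) um up x = 0) /\
  (* (C3), for j = 0, ..., m-2 (vacuous when m = 1) *)
  (forall j : nat, (j + 2 <= m)%nat ->
   forall v : R -> R, is_poly1 (m - 2 - j) v ->
     RInt (fun x => v x *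
             jump_beta betam betap
               (fun u e x' => Derive_n (fun t => Lop J0 J1 J2 u t x') j e)
               um up x) xi0 xi1 = 0).

(* Sign s : true = '+', false = '-'.  Given the piece on side s and the piece on
   the opposite side s', return (piece on eta<0, piece on eta>0). *)
Definition pieces (s : bool) (phis phis' : R -> R -> R) : (R -> R -> R) * (R -> R -> R) :=
  if s then (phis', phis) else (phis, phis').

(* Main.v *)
Require Import Defs.
From Stdlib Require Import Reals Lra Lia FunctionalExtensionality Factorial Arith.
From Coquelicot Require Import Coquelicot.
Open Scope R_scope.


Definition Dt (n:nat) (f: R->R->R) := Nat.iter n d_eta f.

Fixpoint TSn (n:nat) (f:R->R->R) : Prop :=
 match n with O => continuous2 f
 | S n' => continuous2 f /\ (forall e x, ex_derive (fun t => f t x) e) /\ TSn n' (d_eta f) end.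
Definition TS f := forall n, TSn n f.

Lemma TSn_cont n f : TSn n f -> continuous2 f.
Proof. destruct n; simpl; tauto. Qed.

Lemma TSn_S_le n f : TSn (S n) f -> TSn n f.
Proof. revert f; induction n; intros f H; simpl in *; [tauto|]. split; [tauto|]. split; [tauto|]. apply IHn; tauto. Qed.

Lemma TS_d f : TS f -> TS (d_eta f).
Proof. intros H n. exact (proj2 (proj2 (H (S n)))). Qed.
Lemma TS_der f : TS f -> forall e x, ex_derive (fun t => f t x) e.
Proof. intros H. exact (proj1 (proj2 (H 1%nat))). Qed.
Lemma TS_cont f : TS f -> continuous2 f.
Proof. intros H. exact (H O). Qed.

Lemma cont2_plus f g : continuous2 f -> continuous2 g -> continuous2 (fun t x => f t x + g t x).
Proof. intros Hf Hg x y. apply (continuous_plus (fun p : R*R => f (fst p) (snd p)) (fun p : R*R => g (fst p) (snd p))); auto. Qed.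
Lemma cont2_mult f g : continuous2 f -> continuous2 g -> continuous2 (fun t x => f t x * g t x).
Proof. intros Hf Hg x y. apply (continuous_mult (fun p : R*R => f (fst p) (snd p)) (fun p : R*R => g (fst p) (snd p))); auto. Qed.

Lemma d_eta_plus f g : (forall e x, ex_derive (fun t => f t x) e) -> (forall e x, ex_derive (fun t => g t x) e) ->
  d_eta (fun t x => f t x + g t x) = fun t x => d_eta f t x + d_eta g t x.
Proof. intros Hf Hg. apply functional_extensionality; intro t; apply functional_extensionality; intro x.
unfold d_eta. apply (Derive_plus (fun t => f t x) (fun t => g t x)); auto. Qed.
Lemma d_eta_mult f g : (forall e x, ex_derive (fun t => f t x) e) -> (forall e x, ex_derive (fun t => g t x) e) ->
  d_eta (fun t x => f t x * g t x) = fun t x => d_eta f t x * g t x + f t x * d_eta g t x.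
Proof. intros Hf Hg. apply functional_extensionality; intro t; apply functional_extensionality; intro x.
unfold d_eta. apply (Derive_mult (fun t => f t x) (fun t => g t x)); auto. Qed.

Lemma TSn_plus n : forall f g, TSn n f -> TSn n g -> TSn n (fun t x => f t x + g t x).
Proof. induction n; intros f g Hf Hg; simpl in *.
- apply cont2_plus; auto.
- destruct Hf as [Hf1 [Hf2 Hf3]]; destruct Hg as [Hg1 [Hg2 Hg3]]. split; [apply cont2_plus; auto|]. split.
  + intros e x. apply (ex_derive_plus (fun t => f t x) (fun t => g t x)); auto.
  + rewrite d_eta_plus; auto.
Qed.

Lemma TSn_mult n : forall f g, TSn n f -> TSn n g -> TSn n (fun t x => f t x * g t x).
Proof. induction n; intros f g Hf Hg.
- simpl in *. apply cont2_mult; auto.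
- pose proof (TSn_S_le _ _ Hf) as Hf'. pose proof (TSn_S_le _ _ Hg) as Hg'.
  simpl in *. destruct Hf as [Hf1 [Hf2 Hf3]]; destruct Hg as [Hg1 [Hg2 Hg3]]. split; [apply cont2_mult; auto|]. split.
  + intros e x. apply (ex_derive_mult (fun t => f t x) (fun t => g t x)); auto.
  + rewrite d_eta_mult; auto. apply TSn_plus; apply IHn; auto.
Qed.

Lemma TS_plus f g : TS f -> TS g -> TS (fun t x => f t x + g t x).
Proof. intros Hf Hg n; apply TSn_plus; auto. Qed.
Lemma TS_mult f g : TS f -> TS g -> TS (fun t x => f t x * g t x).
Proof. intros Hf Hg n; apply TSn_mult; auto. Qed.

Lemma TS_const_t (g : R -> R) : (forall y, continuous g y) -> TS (fun _ y => g y).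
Proof. intros Hg n. revert g Hg; induction n; intros g Hg.
- intros x y. simpl. apply (continuous_comp (fun p : R*R => snd p) g). apply continuous_snd. apply Hg.
- simpl. split; [intros x y; apply (continuous_comp (fun p : R*R => snd p) g); [apply continuous_snd|apply Hg]|].
  split; [intros; apply ex_derive_const|].
  replace (d_eta (fun _ y => g y)) with (fun (_ y:R) => (fun _ : R => 0) y).
  + apply IHn. intros; apply continuous_const.
  + apply functional_extensionality; intro t; apply functional_extensionality; intro x. unfold d_eta. rewrite Derive_const; auto.
Qed.

Lemma TS_cst (k : R) : TS (fun _ _ => k).
Proof. apply (TS_const_t (fun _ => k)). intros; apply continuous_const. Qed.

Lemma TS_id_t : TS (fun t (_:R) => t).
Proof. intros n; destruct n; simpl.
- intros x y. apply continuous_fst.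
- split; [intros x y; apply continuous_fst|]. split; [intros; apply ex_derive_id|].
  replace (d_eta (fun t _ => t)) with (fun (_ _:R) => 1). apply TS_cst.
  apply functional_extensionality; intro t; apply functional_extensionality; intro x. unfold d_eta. rewrite Derive_id; auto.
Qed.

Lemma TS_pow k : TS (fun t (_:R) => t ^ k).
Proof. induction k; simpl. apply TS_cst. apply (TS_mult (fun t _ => t) (fun t _ => t ^ k)); auto. apply TS_id_t. Qed.

Lemma Dt_S n f : Dt (S n) f = Dt n (d_eta f).
Proof. unfold Dt. apply Nat.iter_succ_r. Qed.
Lemma Dt_S' n f : Dt (S n) f = d_eta (Dt n f).
Proof. reflexivity. Qed.

Lemma Dt_plus n : forall f g, TS f -> TS g -> Dt n (fun t x => f t x + g t x) = fun t x => Dt n f t x + Dt n g t x.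
Proof. induction n; intros f g Hf Hg; [reflexivity|]. rewrite !Dt_S. rewrite d_eta_plus by (apply TS_der; auto).
apply IHn; apply TS_d; auto. Qed.

Lemma Dt_scal_r n f (g : R -> R) : Dt n (fun t x => f t x * g x) = fun t x => Dt n f t x * g x.
Proof. induction n; [reflexivity|]. rewrite !Dt_S', IHn. apply functional_extensionality; intro t; apply functional_extensionality; intro x.
unfold d_eta. apply (Derive_scal_l (fun t => Dt n f t x)). Qed.
Lemma Dt_scal_l n f (g : R -> R) : Dt n (fun t x => g x * f t x) = fun t x => g x * Dt n f t x.
Proof. induction n; [reflexivity|]. rewrite !Dt_S', IHn. apply functional_extensionality; intro t; apply functional_extensionality; intro x.
unfold d_eta. apply (Derive_scal (fun t => Dt n f t x)). Qed.

Lemma Dt_zero n : Dt n (fun _ _ => 0) = fun _ _ => 0.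
Proof. induction n; [reflexivity|]. rewrite Dt_S', IHn. apply functional_extensionality; intro t; apply functional_extensionality; intro x.
unfold d_eta. apply Derive_const. Qed.

Lemma TS_sum (F : nat -> R -> R -> R) N : (forall i, TS (F i)) -> TS (fun t x => sum_f_R0 (fun i => F i t x) N).
Proof. intros H; induction N; simpl. apply H. apply (TS_plus (fun t x => sum_f_R0 (fun i => F i t x) N) (F (S N))); auto. Qed.

Lemma Dt_sum n (F : nat -> R -> R -> R) N : (forall i, TS (F i)) ->
  Dt n (fun t x => sum_f_R0 (fun i => F i t x) N) = fun t x => sum_f_R0 (fun i => Dt n (F i) t x) N.
Proof. intros H; induction N; simpl. reflexivity.
rewrite (Dt_plus n (fun t x => sum_f_R0 (fun i => F i t x) N) (F (S N))); auto. rewrite IHN. reflexivity.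
apply TS_sum; auto. Qed.

Lemma DnDt f x n : forall e, Derive_n (fun t => f t x) n e = Dt n f e x.
Proof. induction n; intro e; [reflexivity|]. simpl Derive_n.
replace (Derive_n (fun t => f t x) n) with (fun e => Dt n f e x). reflexivity.
apply functional_extensionality; intro; auto. Qed.


Definition flat (k:nat) f := forall i x, (i < k)%nat -> Dt i f 0 x = 0.

Lemma flat_le k k' f : (k' <= k)%nat -> flat k f -> flat k' f.
Proof. intros H Hf i x Hi. apply Hf. lia. Qed.

Lemma flat_S k f : (forall x, f 0 x = 0) -> flat k (d_eta f) -> flat (S k) f.
Proof. intros H0 Hf i x Hi. destruct i. apply H0. rewrite Dt_S. apply Hf. lia. Qed.

Lemma flat_d k f : flat (S k) f -> flat k (d_eta f).
Proof. intros Hf i x Hi. rewrite <- Dt_S. apply Hf. lia. Qed.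

Lemma flat_plus k f g : TS f -> TS g -> flat k f -> flat k g -> flat k (fun t x => f t x + g t x).
Proof. intros Hf Hg Ff Fg i x Hi. rewrite Dt_plus by auto. rewrite Ff, Fg by auto. ring. Qed.

Lemma flat_mul_l k : forall f g, TS f -> TS g -> flat k f -> flat k (fun t x => f t x * g t x).
Proof. induction k; intros f g Hf Hg Ff. intros i x Hi; lia.
apply flat_S. intros x. pose proof (Ff O x ltac:(lia)) as H. simpl in H. rewrite H; ring.
rewrite d_eta_mult by (apply TS_der; auto).
apply flat_plus. apply TS_mult; auto; apply TS_d; auto. apply TS_mult; auto; apply TS_d; auto.
apply IHk; auto. apply TS_d; auto. apply flat_d; auto.
apply IHk; auto. apply TS_d; auto. apply (flat_le (S k)); auto.
Qed.

Lemma flat_mul_r k f g : TS f -> TS g -> flat k g -> flat k (fun t x => f t x * g t x).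
Proof. intros Hf Hg Fg. replace (fun t x => f t x * g t x) with (fun t x => g t x * f t x).
apply flat_mul_l; auto. apply functional_extensionality; intro t; apply functional_extensionality; intro x; ring. Qed.

Lemma d_eta_pow k : d_eta (fun t (_:R) => t ^ S k) = fun t _ => INR (S k) * t ^ k.
Proof. apply functional_extensionality; intro t; apply functional_extensionality; intro x.
unfold d_eta. apply is_derive_unique.
pose proof (is_derive_pow (fun t => t) (S k) t 1 (is_derive_id t)) as H. simpl pred in H.
replace (INR (S k) * t ^ k) with (INR (S k) * 1 * t ^ k) by ring. exact H. Qed.

Lemma flat_scal k f (c:R) : TS f -> flat k f -> flat k (fun t x => c * f t x).
Proof. intros Hf Ff. apply (flat_mul_r k (fun _ _ => c) f); auto. apply TS_cst. Qed.

Lemma flat_pow k : flat k (fun t (_:R) => t ^ k).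
Proof. induction k. intros i x Hi; lia.
apply flat_S. intros; simpl; ring. rewrite d_eta_pow. apply (flat_scal k (fun t _ => t ^ k)). apply TS_pow. auto. Qed.

Lemma Dt_scal_c n f (c:R) : Dt n (fun t x => c * f t x) = fun t x => c * Dt n f t x.
Proof. apply (Dt_scal_l n f (fun _ => c)). Qed.

Lemma Dt_pow_self k x : Dt k (fun t (_:R) => t ^ k) 0 x = INR (fact k).
Proof. induction k. simpl. reflexivity.
rewrite Dt_S, d_eta_pow. rewrite (Dt_scal_c k (fun t _ => t ^ k)). rewrite IHk.
change (fact (S k)) with (S k * fact k)%nat. rewrite mult_INR. reflexivity. Qed.

Lemma Dt_pow_mul j : forall g x, TS g -> Dt j (fun t x => t ^ j * g t x) 0 x = INR (fact j) * g 0 x.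
Proof. induction j; intros g x Hg. simpl. ring.
rewrite Dt_S. rewrite d_eta_mult by (apply TS_der; first [apply TS_pow|auto]).
rewrite d_eta_pow.
rewrite Dt_plus.
2:{ apply (TS_mult (fun t x => INR (S j) * t ^ j) g); auto. apply (TS_mult (fun _ _ => INR (S j)) (fun t _ => t ^ j)). apply TS_cst. apply TS_pow. }
2:{ apply (TS_mult (fun t _ => t ^ S j) (d_eta g)). apply TS_pow. apply TS_d; auto. }
replace (fun t x => INR (S j) * t ^ j * g t x) with (fun t x => t ^ j * (fun t x => INR (S j) * g t x) t x).
2:{ apply functional_extensionality; intro t; apply functional_extensionality; intro y; ring. }
rewrite IHj. 2:{ apply (TS_mult (fun _ _ => INR (S j)) g); auto. apply TS_cst. }
rewrite (flat_mul_l (S j) (fun t _ => t ^ S j) (d_eta g)); auto.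
change (fact (S j)) with (S j * fact j)%nat. rewrite mult_INR. ring.
apply TS_pow. apply TS_d; auto. apply flat_pow.
Qed.


Definition smooth1 (p : R -> R) := TS (fun y (_:R) => p y).

Lemma cont_slice f e x : continuous2 f -> continuous (fun y => f e y) x.
Proof. intros H. apply (continuous_comp_2 (fun _ => e) (fun y => y) f). apply continuous_const. apply continuous_id. apply H. Qed.
Lemma cont_slice1 f e x : continuous2 f -> continuous (fun y => f y e) x.
Proof. intros H. apply (continuous_comp_2 (fun y => y) (fun _ => e) f). apply continuous_id. apply continuous_const. apply H. Qed.

Lemma smooth1_cont p x : smooth1 p -> continuous p x.
Proof. intros H. apply (cont_slice1 (fun y (_:R) => p y) 0 x (TS_cont _ H)). Qed.

Lemma Dt_TS n f : TS f -> TS (Dt n f).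
Proof. induction n; intros H; [exact H|]. rewrite Dt_S'. apply TS_d; auto. Qed.

Lemma Dtp_eq p n y t : Dt n (fun y (_:R) => p y) y t = Derive_n p n y.
Proof. rewrite <- (DnDt (fun y (_:R) => p y) t n y). reflexivity. Qed.

Lemma smooth1_Dn_cont p n x : smooth1 p -> continuous (Derive_n p n) x.
Proof. intros H. pose proof (cont_slice1 _ 0 x (TS_cont _ (Dt_TS n _ H))) as H1.
eapply continuous_ext; [|exact H1]. intros y. simpl. apply Dtp_eq. Qed.

Lemma TS_of_smooth1 p : smooth1 p -> TS (fun (_:R) y => p y).
Proof. intros H. apply TS_const_t. intros; apply smooth1_cont; auto. Qed.

Lemma Ck_TSn n f : Ck n f -> TSn n f.
Proof. revert f; induction n; intros f H; simpl in *; [auto|]. split; [tauto|]. split; [tauto|]. apply IHn; tauto. Qed.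
Lemma smooth2_TS f : smooth2 f -> TS f.
Proof. intros H n. apply Ck_TSn; auto. Qed.

Definition T a := fun t (_:R) => t ^ a.

Definition Mp (J0 J1 J2 : R -> R -> R) (a : nat) (p : R -> R) : R -> R -> R :=
  fun t x => Dt 2 (T a) t x * p x +
   (J0 t x * (t ^ a * Derive_n p 2 x) + J1 t x * (Dt 1 (T a) t x * p x) + J2 t x * (t ^ a * Derive_n p 1 x)).

Lemma TS_sn (g : R -> R) : (forall y, continuous g y) -> TS (fun (_:R) y => g y).
Proof. apply TS_const_t. Qed.

Lemma Mp_TS J0 J1 J2 a p : TS J0 -> TS J1 -> TS J2 -> smooth1 p -> TS (Mp J0 J1 J2 a p).
Proof. intros H0 H1 H2 Hp. unfold Mp.
assert (Tp : TS (fun (_:R) x => p x)) by (apply TS_of_smooth1; auto).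
assert (Tp1 : TS (fun (_:R) x => Derive_n p 1 x)) by (apply TS_sn; intros; apply smooth1_Dn_cont; auto).
assert (Tp2 : TS (fun (_:R) x => Derive_n p 2 x)) by (apply TS_sn; intros; apply smooth1_Dn_cont; auto).
assert (Ta : TS (T a)) by apply TS_pow.
apply (TS_plus (fun t x => Dt 2 (T a) t x * p x)).
apply (TS_mult (Dt 2 (T a)) (fun _ x => p x)); auto. apply Dt_TS; auto.
apply TS_plus. apply TS_plus.
apply TS_mult; auto. apply (TS_mult (T a) (fun _ x => Derive_n p 2 x)); auto.
apply TS_mult; auto. apply (TS_mult (Dt 1 (T a)) (fun _ x => p x)); auto. apply Dt_TS; auto.
apply TS_mult; auto. apply (TS_mult (T a) (fun _ x => Derive_n p 1 x)); auto.
Qed.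

Lemma Mp_rest_flat J0 J1 J2 a p k : TS J0 -> TS J1 -> TS J2 -> smooth1 p -> (k + 1 <= a)%nat ->
  flat k (fun t x => J0 t x * (t ^ a * Derive_n p 2 x) + J1 t x * (Dt 1 (T a) t x * p x) + J2 t x * (t ^ a * Derive_n p 1 x)).
Proof. intros H0 H1 H2 Hp Ha.
assert (Tp : TS (fun (_:R) x => p x)) by (apply TS_of_smooth1; auto).
assert (Tp1 : TS (fun (_:R) x => Derive_n p 1 x)) by (apply TS_sn; intros; apply smooth1_Dn_cont; auto).
assert (Tp2 : TS (fun (_:R) x => Derive_n p 2 x)) by (apply TS_sn; intros; apply smooth1_Dn_cont; auto).
assert (Ta : TS (T a)) by apply TS_pow.
assert (Fa : flat a (T a)) by apply flat_pow.
assert (TA1 : TS (fun t x => t ^ a * Derive_n p 2 x)) by (apply (TS_mult (T a) (fun _ x => Derive_n p 2 x)); auto).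
assert (TA2 : TS (fun t x => Dt 1 (T a) t x * p x)) by (apply (TS_mult (Dt 1 (T a)) (fun _ x => p x)); auto; apply Dt_TS; auto).
assert (TA3 : TS (fun t x => t ^ a * Derive_n p 1 x)) by (apply (TS_mult (T a) (fun _ x => Derive_n p 1 x)); auto).
destruct a as [|a]; [lia|].
apply flat_plus. apply TS_plus; apply TS_mult; auto. apply TS_mult; auto.
apply flat_plus; try (apply TS_mult; auto).
apply flat_mul_r; auto. apply (flat_mul_l k (T (S a)) (fun _ x => Derive_n p 2 x)); auto. apply (flat_le (S a)); auto; lia.
apply flat_mul_r; auto. apply (flat_mul_l k (Dt 1 (T (S a))) (fun _ x => p x)); auto. apply Dt_TS; auto.
apply (flat_le a); [lia|]. apply flat_d; auto.
apply flat_mul_r; auto. apply (flat_mul_l k (T (S a)) (fun _ x => Derive_n p 1 x)); auto. apply (flat_le (S a)); auto; lia.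
Qed.

Lemma Mp_rest_TS J0 J1 J2 a p : TS J0 -> TS J1 -> TS J2 -> smooth1 p ->
  TS (fun t x => J0 t x * (t ^ a * Derive_n p 2 x) + J1 t x * (Dt 1 (T a) t x * p x) + J2 t x * (t ^ a * Derive_n p 1 x)).
Proof. intros H0 H1 H2 Hp.
assert (Tp : TS (fun (_:R) x => p x)) by (apply TS_of_smooth1; auto).
assert (Tp1 : TS (fun (_:R) x => Derive_n p 1 x)) by (apply TS_sn; intros; apply smooth1_Dn_cont; auto).
assert (Tp2 : TS (fun (_:R) x => Derive_n p 2 x)) by (apply TS_sn; intros; apply smooth1_Dn_cont; auto).
assert (Ta : TS (T a)) by apply TS_pow.
apply TS_plus. apply TS_plus.
apply TS_mult; auto. apply (TS_mult (T a) (fun _ x => Derive_n p 2 x)); auto.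
apply TS_mult; auto. apply (TS_mult (Dt 1 (T a)) (fun _ x => p x)); auto. apply Dt_TS; auto.
apply TS_mult; auto. apply (TS_mult (T a) (fun _ x => Derive_n p 1 x)); auto.
Qed.

Lemma Mp_A_TS a p : smooth1 p -> TS (fun t x => Dt 2 (T a) t x * p x).
Proof. intros Hp. apply (TS_mult (Dt 2 (T a)) (fun _ x => p x)). apply Dt_TS, TS_pow. apply TS_of_smooth1; auto. Qed.

Lemma Mp_hi J0 J1 J2 a p j x : TS J0 -> TS J1 -> TS J2 -> smooth1 p -> (j + 3 <= a)%nat ->
  Dt j (Mp J0 J1 J2 a p) 0 x = 0.
Proof. intros H0 H1 H2 Hp Ha.
assert (Tp : TS (fun (_:R) x => p x)) by (apply TS_of_smooth1; auto).
assert (Ta : TS (T a)) by apply TS_pow.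
assert (Fl : flat (S j) (Mp J0 J1 J2 a p)).
{ unfold Mp. apply flat_plus. apply Mp_A_TS; auto. apply Mp_rest_TS; auto.
  apply (flat_mul_l _ (Dt 2 (T a)) (fun _ x => p x)); auto. apply Dt_TS; auto.
  destruct a as [|[|a]]; [lia|lia|]. apply (flat_le a); [lia|]. change (Dt 2 (T (S (S a)))) with (d_eta (d_eta (T (S (S a))))).
  apply flat_d, flat_d, flat_pow.
  apply Mp_rest_flat; auto; lia. }
apply Fl; lia.
Qed.

Lemma Mp_eq J0 J1 J2 p j x : TS J0 -> TS J1 -> TS J2 -> smooth1 p ->
  Dt j (Mp J0 J1 J2 (j+2) p) 0 x = INR (fact (j+2)) * p x.
Proof. intros H0 H1 H2 Hp. unfold Mp. rewrite Dt_plus by (first [apply Mp_A_TS|apply Mp_rest_TS]; auto).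
rewrite (Mp_rest_flat J0 J1 J2 (j+2) p (S j)); auto; try lia.
rewrite (Dt_scal_r j (Dt 2 (T (j+2))) p).
replace (Dt j (Dt 2 (T (j+2)))) with (Dt (j+2) (T (j+2))) by (unfold Dt; apply Nat.iter_add).
unfold T. rewrite Dt_pow_self. ring.
Qed.


Definition Wr (m : nat) (r : nat -> R -> R) : R -> R -> R := fun t y => sum_f_R0 (fun a => t ^ a * r a y) m.
Definition rows_ok (r : nat -> R -> R) := forall a, smooth1 (r a).

Lemma pow_cont a x : continuous (fun t => t ^ a) x.
Proof. apply (cont_slice1 (fun t (_:R) => t ^ a) 0 x). apply TS_cont, TS_pow. Qed.

Lemma Dt_Wr n m r : rows_ok r -> Dt n (Wr m r) = fun t x => sum_f_R0 (fun a => Dt n (T a) t x * r a x) m.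
Proof. intros Hr. unfold Wr.
rewrite (Dt_sum n (fun a t y => T a t y * r a y)).
- apply functional_extensionality; intro t; apply functional_extensionality; intro x. apply sum_eq; intros.
  rewrite (Dt_scal_r n (T i) (r i)). reflexivity.
- intros a. apply (TS_mult (T a) (fun _ y => r a y)). apply TS_pow. apply TS_of_smooth1; auto.
Qed.

Lemma Dt_Wr_sw n m r : rows_ok r -> Dt n (fun y t => Wr m r t y) = fun y t => sum_f_R0 (fun a => t ^ a * Derive_n (r a) n y) m.
Proof. intros Hr. unfold Wr.
rewrite (Dt_sum n (fun a y t => (fun t => t ^ a) t * (fun y (_:R) => r a y) y t)).
- apply functional_extensionality; intro y; apply functional_extensionality; intro t. apply sum_eq; intros.
  rewrite (Dt_scal_l n (fun y (_:R) => r i y) (fun t => t ^ i)). rewrite Dtp_eq. reflexivity.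
- intros a. apply (TS_mult (fun _ t => t ^ a) (fun y _ => r a y)). apply TS_sn. intros; apply pow_cont. apply Hr.
Qed.

Lemma Lop_Wr J0 J1 J2 m r e x : rows_ok r ->
  Lop J0 J1 J2 (Wr m r) e x = sum_f_R0 (fun a => Mp J0 J1 J2 a (r a) e x) m.
Proof. intros Hr. unfold Lop.
rewrite (DnDt (Wr m r) x 2 e).
rewrite (DnDt (fun y t => Wr m r t y) e 2 x).
change (Derive (fun t => Wr m r t x) e) with (Dt 1 (Wr m r) e x).
change (Derive (fun t => Wr m r e t) x) with (Dt 1 (fun y t => Wr m r t y) x e).
rewrite !Dt_Wr, !Dt_Wr_sw by auto.
unfold Mp. rewrite !scal_sum. rewrite <- !sum_plus. apply sum_eq; intros. unfold T. ring.
Qed.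

Definition Fr J0 J1 J2 m j r x := sum_f_R0 (fun a => Dt j (Mp J0 J1 J2 a (r a)) 0 x) m.

Lemma Fr_eq J0 J1 J2 m j r x : TS J0 -> TS J1 -> TS J2 -> rows_ok r ->
  Derive_n (fun t => Lop J0 J1 J2 (Wr m r) t x) j 0 = Fr J0 J1 J2 m j r x.
Proof. intros H0 H1 H2 Hr. rewrite (DnDt (Lop J0 J1 J2 (Wr m r)) x j 0).
replace (Lop J0 J1 J2 (Wr m r)) with (fun t x => sum_f_R0 (fun a => Mp J0 J1 J2 a (r a) t x) m).
rewrite Dt_sum. reflexivity. intros a. apply Mp_TS; auto.
apply functional_extensionality; intro t; apply functional_extensionality; intro y. rewrite Lop_Wr; auto.
Qed.

Lemma Fr_cont J0 J1 J2 m j r x : TS J0 -> TS J1 -> TS J2 -> rows_ok r -> continuous (Fr J0 J1 J2 m j r) x.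
Proof. intros H0 H1 H2 Hr. unfold Fr. induction m; simpl.
- apply (cont_slice (Dt j (Mp J0 J1 J2 0 (r 0%nat))) 0 x). apply TS_cont, Dt_TS, Mp_TS; auto.
- apply (continuous_plus (fun x => sum_f_R0 (fun a => Dt j (Mp J0 J1 J2 a (r a)) 0 x) m)); auto.
  apply (cont_slice (Dt j (Mp J0 J1 J2 (S m) (r (S m)))) 0 x). apply TS_cont, Dt_TS, Mp_TS; auto.
Qed.

Lemma Fr_dep J0 J1 J2 m j r r' x : TS J0 -> TS J1 -> TS J2 -> rows_ok r -> rows_ok r' ->
  (forall a, (a <= j + 2)%nat -> r a = r' a) -> Fr J0 J1 J2 m j r x = Fr J0 J1 J2 m j r' x.
Proof. intros H0 H1 H2 Hr Hr' E. unfold Fr. apply sum_eq. intros a _.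
destruct (le_lt_dec a (j+2)). rewrite E; auto.
rewrite !Mp_hi; auto; lia. Qed.

Lemma sum_ind_if (K : R) i m : sum_f_R0 (fun a => if (a =? i)%nat then K else 0) m = if (i <=? m)%nat then K else 0.
Proof. induction m.
- simpl. destruct i; simpl; reflexivity.
- rewrite tech5, IHm. destruct (Nat.eqb_spec (S m) i).
  + subst. rewrite (proj2 (Nat.leb_nle (S m) m)) by lia. rewrite Nat.leb_refl. ring.
  + destruct (Nat.leb_spec i m); destruct (Nat.leb_spec i (S m)); try lia; ring.
Qed.

Definition zr (k : nat) (r : nat -> R -> R) := fun a => if (a =? k)%nat then (fun _ : R => 0) else r a.

Lemma smooth1_zero : smooth1 (fun _ => 0).
Proof. exact (TS_cst 0). Qed.

Lemma rows_zr k r : rows_ok r -> rows_ok (zr k r).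
Proof. intros H a. unfold zr. destruct (a =? k)%nat. apply smooth1_zero. auto. Qed.

Lemma Fr_split J0 J1 J2 m j r x : TS J0 -> TS J1 -> TS J2 -> rows_ok r -> (j + 2 <= m)%nat ->
  Fr J0 J1 J2 m j r x = Fr J0 J1 J2 m j (zr (j+2) r) x + INR (fact (j+2)) * r (j+2)%nat x.
Proof. intros H0 H1 H2 Hr Hm. unfold Fr.
transitivity (sum_f_R0 (fun a => Dt j (Mp J0 J1 J2 a (zr (j+2) r a)) 0 x + (if (a =? j+2)%nat then INR (fact (j+2)) * r (j+2)%nat x else 0)) m).
- apply sum_eq. intros a _. unfold zr. destruct (Nat.eqb_spec a (j+2)).
  + subst. rewrite !Mp_eq; auto. ring. apply smooth1_zero.
  + ring.
- rewrite sum_plus. rewrite sum_ind_if. rewrite (proj2 (Nat.leb_le _ _) Hm). reflexivity.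
Qed.

Lemma Wr_0 m r x : Wr m r 0 x = r 0%nat x.
Proof. unfold Wr. induction m; simpl. ring. rewrite IHm. ring. Qed.

Lemma Dt1_T0 a : Dt 1 (T a) 0 0 = if (a =? 1)%nat then 1 else 0.
Proof. destruct a. simpl. unfold d_eta, T. simpl. apply Derive_const.
change (Dt 1 (T (S a))) with (d_eta (fun t (_:R) => t ^ S a)). rewrite d_eta_pow.
destruct a; simpl; ring. Qed.

Lemma Dt1_T a x : Dt 1 (T a) 0 x = if (a =? 1)%nat then 1 else 0.
Proof. destruct a. simpl. unfold d_eta, T. simpl. apply Derive_const.
change (Dt 1 (T (S a))) with (d_eta (fun t (_:R) => t ^ S a)). rewrite d_eta_pow.
destruct a; simpl; ring. Qed.

Lemma Wr_1 m r x : (1 <= m)%nat -> rows_ok r -> d_eta (Wr m r) 0 x = r 1%nat x.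
Proof. intros Hm Hr. change (d_eta (Wr m r)) with (Dt 1 (Wr m r)). rewrite Dt_Wr by auto.
induction m. lia. destruct m.
- simpl. rewrite !Dt1_T. simpl. ring.
- rewrite tech5. rewrite IHm by lia. rewrite Dt1_T. simpl. ring.
Qed.


Definition cont (f : R -> R) := forall x, continuous f x.

Lemma cont_plus f g : cont f -> cont g -> cont (fun x => f x + g x).
Proof. intros Hf Hg x. apply (continuous_plus f g); auto. Qed.
Lemma cont_mult f g : cont f -> cont g -> cont (fun x => f x * g x).
Proof. intros Hf Hg x. apply (continuous_mult f g); auto. Qed.
Lemma cont_const k : cont (fun _ => k).
Proof. intros x; apply continuous_const. Qed.
Lemma cont_scal k f : cont f -> cont (fun x => k * f x).
Proof. intros; apply cont_mult; auto; apply cont_const. Qed.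
Lemma cont_minus f g : cont f -> cont g -> cont (fun x => f x - g x).
Proof. intros Hf Hg. apply (cont_plus f (fun x => - g x)); auto.
intros x. apply (continuous_ext (fun x => -1 * g x)); [intros y; change (-1 * g y = - g y); ring|apply cont_scal; auto]. Qed.
Lemma cont_pow k : cont (fun x => x ^ k).
Proof. intros x; apply pow_cont. Qed.

Lemma exRI f a b : cont f -> ex_RInt f a b.
Proof. intros H. apply (ex_RInt_continuous (V:=R_CompleteNormedModule)). intros; apply H. Qed.

Lemma RI_plus f g a b : cont f -> cont g -> RInt (fun x => f x + g x) a b = RInt f a b + RInt g a b.
Proof. intros Hf Hg. apply (RInt_plus f g); apply exRI; auto. Qed.
Lemma RI_scal k f a b : cont f -> RInt (fun x => k * f x) a b = k * RInt f a b.
Proof. intros Hf. apply (RInt_scal f a b k); apply exRI; auto. Qed.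
Lemma RI_minus f g a b : cont f -> cont g -> RInt (fun x => f x - g x) a b = RInt f a b - RInt g a b.
Proof. intros Hf Hg. apply (RInt_minus f g); apply exRI; auto. Qed.
Lemma RI_ext (f g : R -> R) a b : (forall x, f x = g x) -> RInt f a b = RInt g a b.
Proof. intros H. f_equal. apply functional_extensionality; auto. Qed.
Lemma RI_zero a b : RInt (fun _ => 0) a b = 0.
Proof. rewrite RInt_const. unfold scal; simpl; unfold mult; simpl. ring. Qed.

Lemma deriv_zero_loc p a b x l : (forall y, a < y < b -> p y = 0) -> a < x < b -> is_derive p x l -> l = 0.
Proof. intros H Hx D.
assert (L : locally x (fun t => p t = (fun _ => 0) t)).
{ assert (O : open (fun t => a < t /\ t < b)) by (apply open_and; [apply open_gt|apply open_lt]).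
  apply (filter_imp (fun t => a < t /\ t < b)). intros t Ht; apply H; auto. apply O; auto. }
pose proof (is_derive_ext_loc _ _ _ _ L D) as D2.
pose proof (is_derive_unique _ _ _ D2) as E1. rewrite Derive_const in E1. auto. Qed.

Lemma is_derive_poly k (c : nat -> R) x :
  is_derive (fun x => sum_f_R0 (fun i => c i * x ^ i) k) x (sum_f_R0 (fun i => c i * (INR i * x ^ pred i)) k).
Proof. induction k.
- simpl. apply (is_derive_ext (fun _ => c 0%nat)). intros; simpl; ring.
  replace (c 0%nat * (0 * 1)) with (@zero R_NormedModule). apply is_derive_const. unfold zero; simpl; ring.
- rewrite tech5. apply (is_derive_ext (fun x => sum_f_R0 (fun i => c i * x ^ i) k + c (S k) * x ^ S k)).
  intros; reflexivity.
  apply (is_derive_plus (fun x => sum_f_R0 (fun i => c i * x ^ i) k) (fun x => c (S k) * x ^ S k)); auto.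
  apply is_derive_scal.
  pose proof (is_derive_pow (fun t => t) (S k) x 1 (is_derive_id x)) as H. simpl pred in H.
  replace (INR (S k) * x ^ pred (S k)) with (INR (S k) * 1 * x ^ k) by (simpl pred; ring). exact H.
Qed.

Lemma Zc k : forall (c : nat -> R) a b, a < b -> (forall x, a < x < b -> sum_f_R0 (fun i => c i * x ^ i) k = 0) ->
  forall i, (i <= k)%nat -> c i = 0.
Proof. induction k; intros c a b Hab H i Hi.
- assert (i = 0%nat) by lia. subst. pose proof (H ((a+b)/2) ltac:(lra)). simpl in H0. lra.
- assert (Hd : forall x, a < x < b -> sum_f_R0 (fun i => (c (S i) * INR (S i)) * x ^ i) k = 0).
  { intros x Hx. pose proof (is_derive_poly (S k) c x) as D.
    pose proof (deriv_zero_loc _ a b x _ H Hx D) as Z.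
    rewrite decomp_sum in Z by lia. simpl pred in Z. rewrite <- Z. simpl. 
    replace (c 0%nat * (0 * 1)) with 0 by ring. rewrite Rplus_0_l. apply sum_eq. intros. ring. }
  assert (HS : forall i, (i <= k)%nat -> c (S i) = 0).
  { intros j Hj. pose proof (IHk (fun i => c (S i) * INR (S i)) a b Hab Hd j Hj) as E. cbv beta in E.
    apply Rmult_integral in E. destruct E as [E|E]; auto. exfalso. rewrite S_INR in E. pose proof (pos_INR j). lra. }
  destruct i.
  + pose proof (H ((a+b)/2) ltac:(lra)) as E. rewrite decomp_sum in E by lia. simpl pred in E.
    rewrite (sum_eq _ (fun _ => 0)) in E. rewrite sum_cte in E. simpl in E. lra.
    intros j Hj. rewrite HS by lia. ring.
  + apply HS; lia.
Qed.

Lemma Zpoly k p a b : a < b -> is_poly1 k p -> (forall x, a < x < b -> p x = 0) -> forall x, p x = 0.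
Proof. intros Hab [c Hc] H x. rewrite Hc. rewrite (sum_eq _ (fun _ => 0)). rewrite sum_cte. ring.
intros i Hi. rewrite (Zc k c a b Hab) by (auto; intros y Hy; rewrite <- Hc; auto). ring. Qed.

Lemma L2zero p a b : a < b -> cont p -> RInt (fun x => p x * p x) a b = 0 -> forall x, a < x < b -> p x = 0.
Proof. intros Hab Hp H0 x Hx.
set (F := fun y => RInt (fun x => p x * p x) a y).
assert (Cpp : cont (fun x => p x * p x)) by (apply cont_mult; auto).
assert (Fz : forall y, a < y < b -> F y = 0).
{ intros y Hy. assert (0 <= F y) by (apply RInt_ge_0; [lra|apply exRI; auto|intros; apply Rle_0_sqr]).
  assert (0 <= RInt (fun x => p x * p x) y b) by (apply RInt_ge_0; [lra|apply exRI; auto|intros; apply Rle_0_sqr]).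
  pose proof (RInt_Chasles (fun x => p x * p x) a y b (exRI _ _ _ Cpp) (exRI _ _ _ Cpp)) as Ch.
  unfold plus in Ch; simpl in Ch. unfold F in *. lra. }
assert (D : is_derive F x (p x * p x)).
{ apply (is_derive_RInt (fun x => p x * p x) F a x). apply filter_forall. intros y. unfold F. apply (RInt_correct (V:=R_CompleteNormedModule)). apply exRI; auto. apply Cpp. }
pose proof (deriv_zero_loc F a b x _ Fz Hx D). nra. Qed.


Fixpoint sumn (n : nat) (f : nat -> R) : R := match n with O => 0 | S n => sumn n f + f n end.
Definition Vn n (v : R -> R) := exists c : nat -> R, forall x, v x = sumn n (fun i => c i * x ^ i).

Lemma sumn_sum k f : sumn (S k) f = sum_f_R0 f k.
Proof. induction k. simpl; ring. change (sumn (S (S k)) f) with (sumn (S k) f + f (S k)). rewrite IHk. rewrite tech5. reflexivity. Qed.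

Lemma sumn_ext n f g : (forall i, (i < n)%nat -> f i = g i) -> sumn n f = sumn n g.
Proof. induction n; intros H; simpl; auto. rewrite IHn by (intros; apply H; lia). rewrite H by lia. reflexivity. Qed.

Lemma sumn_lin n f g (k : R) : sumn n (fun i => f i + k * g i) = sumn n f + k * sumn n g.
Proof. induction n; simpl. ring. rewrite IHn. ring. Qed.

Lemma sumn_cont n (c : nat -> R) : cont (fun x => sumn n (fun i => c i * x ^ i)).
Proof. induction n; simpl. apply cont_const. apply (cont_plus (fun x => sumn n (fun i => c i * x ^ i))); auto.
apply cont_scal, cont_pow. Qed.

Lemma Vn_cont n v : Vn n v -> cont v.
Proof. intros [c Hc]. replace v with (fun x => sumn n (fun i => c i * x ^ i)). apply sumn_cont.
apply functional_extensionality; intros; auto. Qed.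

Definition Proj (V : (R -> R) -> Prop) a b := forall g, cont g -> exists q, V q /\ forall v, V v -> RInt (fun x => v x * (q x - g x)) a b = 0.

Lemma Proj0 a b : Proj (Vn 0) a b.
Proof. intros g Hg. exists (fun _ => 0). split. exists (fun _ => 0). intros; simpl; auto.
intros v [c Hc]. rewrite (RI_ext _ (fun _ => 0)). apply RI_zero. intros x. rewrite Hc. simpl. ring. Qed.

Lemma ProjS a b n : a < b -> Proj (Vn n) a b -> Proj (Vn (S n)) a b.
Proof. intros Hab IH g Hg.
set (h := fun x : R => x ^ n).
destruct (IH h (cont_pow n)) as [qh [[ch Hch] Ph]].
destruct (IH g Hg) as [qg [[cg Hcg] Pg]].
assert (Cqh : cont qh) by (apply (Vn_cont n); exists ch; auto).
assert (Cqg : cont qg) by (apply (Vn_cont n); exists cg; auto).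
set (r := fun x => h x - qh x).
assert (Cr : cont r) by (apply cont_minus; auto; apply cont_pow).
set (N := RInt (fun x => r x * r x) a b).
assert (NN : N <> 0).
{ intros HN. pose proof (L2zero r a b Hab Cr HN) as Z.
  pose proof (Zc n (fun i => if (i =? n)%nat then 1 else - ch i) a b Hab) as Zc1.
  assert (E : (if (n =? n)%nat then 1 else - ch n) = 0).
  { apply Zc1; auto. intros x Hx. rewrite <- sumn_sum. simpl. rewrite Nat.eqb_refl.
    rewrite <- (Z x Hx). unfold r, h. rewrite Hch.
    rewrite (sumn_ext n _ (fun i => 0 + (-1) * (ch i * x ^ i))). rewrite sumn_lin.
    replace (sumn n (fun _ => 0)) with 0. ring. clear. induction n; simpl; auto. rewrite <- IHn; ring.
    intros i Hi. rewrite (proj2 (Nat.eqb_neq i n)) by lia. ring. }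
  rewrite Nat.eqb_refl in E. lra. }
set (al := RInt (fun x => r x * g x) a b / N).
exists (fun x => qg x + al * r x). split.
- exists (fun i => if (i =? n)%nat then al else cg i + (-al) * ch i). intros x. simpl. rewrite Nat.eqb_refl.
  rewrite (sumn_ext n _ (fun i => cg i * x ^ i + (-al) * (ch i * x ^ i))). rewrite sumn_lin.
  rewrite <- Hcg, <- Hch. unfold r, h. ring.
  intros i Hi. rewrite (proj2 (Nat.eqb_neq i n)) by lia. ring.
- intros v [cv Hcv]. simpl in Hcv.
  set (w' := fun x => sumn n (fun i => cv i * x ^ i) + cv n * qh x).
  assert (Vw : Vn n w').
  { exists (fun i => cv i + cv n * ch i). intros x. unfold w'. rewrite Hch.
    rewrite (sumn_ext n (fun i => (cv i + cv n * ch i) * x ^ i) (fun i => cv i * x ^ i + cv n * (ch i * x ^ i))). rewrite sumn_lin. reflexivity. intros i Hi. ring. }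
  assert (Cw : cont w') by (apply (Vn_cont n); auto).
  rewrite (RI_ext _ (fun x => (fun x => w' x * (qg x - g x)) x + (- al) * (fun x => w' x * (qh x - h x)) x
      + (- cv n) * (fun x => qg x * (qh x - h x)) x + (- cv n) * (fun x => r x * g x) x + (cv n * al) * (fun x => r x * r x) x)).
  2:{ intros x. cbv beta. rewrite Hcv. unfold w', r, h. ring. }
  assert (Ch : cont h) by apply cont_pow.
  rewrite !RI_plus; repeat (first [assumption | apply cont_minus | apply cont_plus | apply cont_scal | apply cont_mult]).
  rewrite !RI_scal; repeat (first [assumption | apply cont_minus | apply cont_plus | apply cont_scal | apply cont_mult]).

  rewrite (Pg w' Vw), (Ph w' Vw), (Ph qg) by (exists cg; auto).
  fold N. unfold al. match goal with |- ?A = ?B => change (@eq R A B) end. field. auto.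
Qed.

Lemma Proj_all a b n : a < b -> Proj (Vn n) a b.
Proof. intros Hab. induction n. apply Proj0. apply ProjS; auto. Qed.

Lemma proj_poly1 a b k g : a < b -> cont g -> exists qc : nat -> R, forall v, is_poly1 k v ->
  RInt (fun x => v x * (sum_f_R0 (fun i => qc i * x ^ i) k - g x)) a b = 0.
Proof. intros Hab Hg. destruct (Proj_all a b (S k) Hab g Hg) as [q [[qc Hq] P]].
exists qc. intros v [cv Hv]. rewrite <- (P v). apply RI_ext. intros x. rewrite Hq, sumn_sum. reflexivity.
exists cv. intros x. rewrite Hv, sumn_sum. reflexivity. Qed.


Definition P m (c : nat -> nat -> R) a y := sum_f_R0 (fun b => if (a + b <=? m)%nat then c a b * y ^ b else 0) m.
Definition Pr m c := fun a => P m c a.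

Lemma poly2_W m c (f : R -> R -> R) :
  (forall e x, f e x = sum_f_R0 (fun a => sum_f_R0 (fun b => if (a + b <=? m)%nat then c a b * e ^ a * x ^ b else 0) m) m) ->
  f = Wr m (Pr m c).
Proof. intros H. apply functional_extensionality; intro e; apply functional_extensionality; intro x.
rewrite H. unfold Wr, Pr, P. apply sum_eq; intros a _. rewrite scal_sum. apply sum_eq; intros b _.
destruct (a + b <=? m)%nat; ring. Qed.

Lemma W_poly2 m c : is_poly2 m (Wr m (Pr m c)).
Proof. exists c. intros e x. unfold Wr, Pr, P. apply sum_eq; intros a _. rewrite scal_sum. apply sum_eq; intros b _.
destruct (a + b <=? m)%nat; ring. Qed.

Lemma smooth1_sum (F : nat -> R -> R) N : (forall i, smooth1 (F i)) -> smooth1 (fun y => sum_f_R0 (fun i => F i y) N).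
Proof. intros H. unfold smooth1. apply (TS_sum (fun i y (_:R) => F i y)). intros; apply H. Qed.

Lemma smooth1_mon (k : R) b : smooth1 (fun y => k * y ^ b).
Proof. unfold smooth1. apply (TS_mult (fun _ _ => k) (fun y _ => y ^ b)). apply TS_cst. apply TS_pow. Qed.

Lemma rows_P m c : rows_ok (Pr m c).
Proof. intros a. unfold Pr, P. apply (smooth1_sum (fun b y => if (a + b <=? m)%nat then c a b * y ^ b else 0)).
intros b. destruct (a + b <=? m)%nat. apply smooth1_mon. apply smooth1_zero. Qed.

Lemma sum_trunc (f : nat -> R) k m : (k <= m)%nat -> sum_f_R0 (fun b => if (b <=? k)%nat then f b else 0) m = sum_f_R0 f k.
Proof. intros H. induction m.
- assert (k = 0%nat) by lia. subst. simpl. reflexivity.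
- destruct (Nat.eq_dec k (S m)).
  + subst. apply sum_eq. intros i Hi. destruct (Nat.leb_spec i (S m)); [auto|lia].
  + rewrite tech5, IHm by lia. rewrite (proj2 (Nat.leb_nle (S m) k)) by lia. ring.
Qed.

Lemma P_trunc m c a y : (a <= m)%nat -> P m c a y = sum_f_R0 (fun b => c a b * y ^ b) (m - a).
Proof. intros H. unfold P. rewrite <- (sum_trunc _ (m - a) m) by lia. apply sum_eq. intros b _.
destruct (Nat.leb_spec (a + b) m); destruct (Nat.leb_spec b (m - a)); auto; lia. Qed.

Lemma P_poly1 m c a : (a <= m)%nat -> is_poly1 (m - a) (P m c a).
Proof. intros H. exists (c a). intros y. apply P_trunc; auto. Qed.

Lemma poly1_minus k p q : is_poly1 k p -> is_poly1 k q -> is_poly1 k (fun x => p x - q x).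
Proof. intros [c1 H1] [c2 H2]. exists (fun i => c1 i - c2 i). intros x. rewrite H1, H2, <- minus_sum. apply sum_eq. intros; ring. Qed.

Lemma poly1_cont k p : is_poly1 k p -> cont p.
Proof. intros [c H]. apply (Vn_cont (S k)). exists c. intros x. rewrite H, sumn_sum. auto. Qed.

Definition Core J0 J1 J2 m xi0 xi1 bs b' cs c :=
  (forall x, xi0 <= x <= xi1 -> P m c 0 x = P m cs 0 x) /\
  (forall x, xi0 <= x <= xi1 -> b' * P m c 1 x = bs * P m cs 1 x) /\
  (forall j, (j + 2 <= m)%nat -> forall v, is_poly1 (m - 2 - j) v ->
     RInt (fun x => v x * (b' * Fr J0 J1 J2 m j (Pr m c) x - bs * Fr J0 J1 J2 m j (Pr m cs) x)) xi0 xi1 = 0).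


Lemma fact_pos n : 0 < INR (fact n).
Proof. apply lt_0_INR. apply lt_O_fact. Qed.

Lemma Fr_cont' J0 J1 J2 m j r : TS J0 -> TS J1 -> TS J2 -> rows_ok r -> cont (Fr J0 J1 J2 m j r).
Proof. intros; intros x; apply Fr_cont; auto. Qed.

Lemma exist_core J0 J1 J2 m xi0 xi1 bs b' cs : TS J0 -> TS J1 -> TS J2 -> (1 <= m)%nat -> xi0 < xi1 -> 0 < bs -> 0 < b' ->
  exists c, Core J0 J1 J2 m xi0 xi1 bs b' cs c.
Proof. intros H0 H1 H2 Hm Hxi Hbs Hb'.
assert (Gen : forall n, (1 <= n)%nat -> (n <= m)%nat -> exists c,
  (forall x, xi0 <= x <= xi1 -> P m c 0 x = P m cs 0 x) /\
  (forall x, xi0 <= x <= xi1 -> b' * P m c 1 x = bs * P m cs 1 x) /\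
  (forall j, (j + 2 <= n)%nat -> forall v, is_poly1 (m - 2 - j) v ->
     RInt (fun x => v x * (b' * Fr J0 J1 J2 m j (Pr m c) x - bs * Fr J0 J1 J2 m j (Pr m cs) x)) xi0 xi1 = 0)).
{ induction n; intros Hn1 Hnm; [lia|]. destruct n as [|n].
  - exists (fun a b => if (a =? 0)%nat then cs 0%nat b else if (a =? 1)%nat then bs / b' * cs 1%nat b else 0).
    split; [|split].
    + intros x _. unfold P. apply sum_eq. intros b _. reflexivity.
    + intros x _. unfold P. rewrite scal_sum. rewrite scal_sum. apply sum_eq. intros b _. simpl.
      repeat match goal with |- context[if ?B then _ else _] => destruct B end; field; lra.
    + intros j Hj; lia.
  - destruct (IHn ltac:(lia) ltac:(lia)) as [c [C1 [C2 C3]]].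
    set (r := Pr m c). set (N := S (S n)).
    set (G := Fr J0 J1 J2 m n (zr (n + 2) r)).
    set (Fs := Fr J0 J1 J2 m n (Pr m cs)).
    set (K := INR (fact (n + 2))).
    assert (HK : 0 < K) by apply fact_pos.
    set (g := fun x => (bs * Fs x - b' * G x) / (b' * K)).
    assert (Cg : cont g).
    { unfold g. intros x. apply (continuous_ext (fun x => (/ (b' * K)) * (bs * Fs x + (- b') * G x))).
      intros y; match goal with |- ?A = ?B => change (@eq R A B) end; unfold Rdiv; ring.
      apply cont_scal, cont_plus; apply cont_scal; apply Fr_cont'; auto. apply rows_P. apply rows_zr, rows_P. }
    destruct (proj_poly1 xi0 xi1 (m - N) g Hxi Cg) as [qc Hq].
    set (q := fun y => sum_f_R0 (fun i => qc i * y ^ i) (m - N)).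
    exists (fun a b => if (a =? N)%nat then qc b else c a b).
    set (c' := (fun a b => if (a =? N)%nat then qc b else c a b)).
    assert (Er : Pr m c' = fun a => if (a =? N)%nat then q else r a).
    { apply functional_extensionality; intro a. apply functional_extensionality; intro y.
      unfold Pr. destruct (Nat.eqb_spec a N).
      - subst a. rewrite P_trunc by lia. unfold c', q. rewrite Nat.eqb_refl. reflexivity.
      - unfold r, Pr, P, c'. apply sum_eq. intros b _. rewrite (proj2 (Nat.eqb_neq a N) n0). reflexivity. }
    assert (R0 : forall a, (a <> N)%nat -> P m c' a = r a).
    { intros a Ha. change (P m c' a) with (Pr m c' a). rewrite Er. rewrite (proj2 (Nat.eqb_neq a N) Ha). auto. }
    split; [|split].
    + intros x Hx. rewrite R0 by (unfold N; lia). apply C1; auto.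
    + intros x Hx. rewrite R0 by (unfold N; lia). apply C2; auto.
    + intros j Hj v Hv. destruct (le_lt_dec (j + 2) (S n)).
      * replace (Fr J0 J1 J2 m j (Pr m c')) with (Fr J0 J1 J2 m j r). apply C3; auto.
        apply functional_extensionality; intro x.
        apply (Fr_dep J0 J1 J2 m j r (Pr m c')); auto.
        apply rows_P. apply rows_P. intros a Ha. rewrite Er. rewrite (proj2 (Nat.eqb_neq a N)) by (unfold N; lia). auto.
      * assert (j = n) by lia. subst j.
        assert (Fe : forall x, Fr J0 J1 J2 m n (Pr m c') x = G x + K * q x).
        { intros x. rewrite Fr_split by (auto; try apply rows_P; lia).
          replace (zr (n + 2) (Pr m c')) with (zr (n + 2) r).
          replace (Pr m c' (n + 2)%nat) with q. reflexivity.
          rewrite Er. replace (n + 2)%nat with N by (unfold N; lia). rewrite Nat.eqb_refl. auto.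
          apply functional_extensionality; intro a. unfold zr. rewrite Er.
          destruct (Nat.eqb_spec a (n+2)); auto. rewrite (proj2 (Nat.eqb_neq a N)) by (unfold N; lia). auto. }
        rewrite (RI_ext _ (fun x => (b' * K) * (v x * (q x - g x)))).
        rewrite RI_scal. rewrite Hq. match goal with |- ?A = ?B => change (@eq R A B) end. ring.
        replace (m - N)%nat with (m - 2 - n)%nat by (unfold N; lia); exact Hv.
        apply cont_mult. apply (poly1_cont _ _ Hv). apply cont_minus; auto.
        apply (poly1_cont (m - N)). exists qc; auto.
        intros x. rewrite Fe. fold (Fs x). unfold g. field. lra. }
destruct (Gen m Hm (le_n m)) as [c Hc]. exists c. exact Hc.
Qed.


Lemma row_eq m c1 c2 a xi0 xi1 : xi0 < xi1 -> (a <= m)%nat ->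
  (forall x, xi0 < x < xi1 -> P m c1 a x = P m c2 a x) -> Pr m c1 a = Pr m c2 a.
Proof. intros Hxi Ha H. apply functional_extensionality; intro y. unfold Pr.
pose proof (Zpoly (m - a) (fun x => P m c1 a x - P m c2 a x) xi0 xi1 Hxi) as Z.
assert (P m c1 a y - P m c2 a y = 0). apply Z. apply poly1_minus; apply P_poly1; auto.
intros x Hx. rewrite H; auto. ring. lra. Qed.

Lemma uniq_core J0 J1 J2 m xi0 xi1 bs b' cs c1 c2 : TS J0 -> TS J1 -> TS J2 -> xi0 < xi1 -> 0 < b' ->
  Core J0 J1 J2 m xi0 xi1 bs b' cs c1 -> Core J0 J1 J2 m xi0 xi1 bs b' cs c2 -> Wr m (Pr m c1) = Wr m (Pr m c2).
Proof. intros H0 H1 H2 Hxi Hb' [A1 [B1 C1]] [A2 [B2 C2]].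
assert (Rows : forall a, (a <= m)%nat -> Pr m c1 a = Pr m c2 a).
{ intros a. induction a as [a IH] using (well_founded_induction lt_wf). intros Ha.
  destruct a as [|[|j]].
  - apply (row_eq m c1 c2 0 xi0 xi1); auto. intros x Hx. rewrite A1, A2; auto; lra.
  - apply (row_eq m c1 c2 1 xi0 xi1); auto. intros x Hx. apply (Rmult_eq_reg_l b'); [|lra]. rewrite B1, B2; auto; lra.
  - apply (row_eq m c1 c2 (S (S j)) xi0 xi1); auto.
    set (D := fun x => P m c1 (S (S j)) x - P m c2 (S (S j)) x).
    assert (PD : is_poly1 (m - 2 - j) D).
    { replace (m - 2 - j)%nat with (m - S (S j))%nat by lia. apply poly1_minus; apply P_poly1; auto. }
    set (K := INR (fact (j + 2))).
    assert (HK : 0 < K) by apply fact_pos.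
    assert (Fd : forall x, Fr J0 J1 J2 m j (Pr m c1) x - Fr J0 J1 J2 m j (Pr m c2) x = K * D x).
    { intros x. rewrite (Fr_split J0 J1 J2 m j (Pr m c1)), (Fr_split J0 J1 J2 m j (Pr m c2)) by (auto; try apply rows_P; lia).
      rewrite (Fr_dep J0 J1 J2 m j (zr (j+2) (Pr m c1)) (zr (j+2) (Pr m c2))); auto.
      unfold D. replace (S (S j)) with (j + 2)%nat by lia. unfold K. unfold Pr. ring.
      apply rows_zr, rows_P. apply rows_zr, rows_P.
      intros a Ha2. unfold zr. destruct (Nat.eqb_spec a (j+2)); auto. apply IH; lia. }
    pose proof (C1 j ltac:(lia) D PD) as I1. pose proof (C2 j ltac:(lia) D PD) as I2.
    assert (CD : cont D) by (apply (poly1_cont _ _ PD)).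
    assert (Cf : forall c, cont (fun x => D x * (b' * Fr J0 J1 J2 m j (Pr m c) x - bs * Fr J0 J1 J2 m j (Pr m cs) x))).
    { intros c. apply cont_mult; auto. apply cont_minus; apply cont_scal; apply Fr_cont'; auto; apply rows_P. }
    assert (E : RInt (fun x => (b' * K) * (D x * D x)) xi0 xi1 = 0).
    { rewrite <- (Rminus_diag_eq _ _ (eq_trans I1 (eq_sym I2))).
      rewrite <- RI_minus by apply Cf.
      apply RI_ext. intros x. rewrite <- (Rmult_1_l (b' * K * (D x * D x))).
      replace (b' * K * (D x * D x)) with (D x * (b' * (K * D x))) by ring.
      rewrite <- Fd. ring. }
    rewrite RI_scal in E by (apply cont_mult; auto).
    assert (E2 : RInt (fun x => D x * D x) xi0 xi1 = 0).
    { apply Rmult_integral in E. destruct E as [E|E]; auto. exfalso. nra. }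
    intros x Hx. pose proof (L2zero D xi0 xi1 Hxi CD E2 x Hx). unfold D in H. lra. }
apply functional_extensionality; intro t; apply functional_extensionality; intro y.
unfold Wr. apply sum_eq. intros a Ha. rewrite (Rows a Ha). reflexivity.
Qed.


Lemma jump3 J0 J1 J2 m bm bp j c1 c2 : TS J0 -> TS J1 -> TS J2 ->
  (fun x => jump_beta bm bp (fun u e x' => Derive_n (fun t => Lop J0 J1 J2 u t x') j e) (Wr m (Pr m c1)) (Wr m (Pr m c2)) x)
  = fun x => bp * Fr J0 J1 J2 m j (Pr m c2) x - bm * Fr J0 J1 J2 m j (Pr m c1) x.
Proof. intros H0 H1 H2. apply functional_extensionality; intro x. unfold jump_beta.
rewrite !Fr_eq; auto; apply rows_P. Qed.

Lemma iface_false J0 J1 J2 m xi0 xi1 bm bp cs c : TS J0 -> TS J1 -> TS J2 -> (1 <= m)%nat ->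
  interface_conds m xi0 xi1 bm bp J0 J1 J2 (Wr m (Pr m cs)) (Wr m (Pr m c)) <-> Core J0 J1 J2 m xi0 xi1 bm bp cs c.
Proof. intros H0 H1 H2 Hm. unfold interface_conds, Core. split; intros [A [B C]]; split; [| split | |split].
- intros x Hx. pose proof (A x Hx). rewrite !Wr_0 in H. unfold Pr in H. lra.
- intros x Hx. pose proof (B x Hx). unfold jump_beta in H. rewrite !Wr_1 in H by (auto; apply rows_P). unfold Pr in H. lra.
- intros j Hj v Hv. pose proof (C j Hj v Hv) as E.
  rewrite <- E. f_equal. apply functional_extensionality; intro x. f_equal.
  pose proof (jump3 J0 J1 J2 m bm bp j cs c H0 H1 H2) as J. apply (f_equal (fun f => f x)) in J. cbv beta in J. rewrite J. reflexivity.
- intros x Hx. rewrite !Wr_0. unfold Pr. rewrite A; auto. ring.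
- intros x Hx. unfold jump_beta. rewrite !Wr_1 by (auto; apply rows_P). unfold Pr. rewrite B; auto. ring.
- intros j Hj v Hv. rewrite <- (C j Hj v Hv). f_equal. apply functional_extensionality; intro x. f_equal.
  pose proof (jump3 J0 J1 J2 m bm bp j cs c H0 H1 H2) as J. apply (f_equal (fun f => f x)) in J. cbv beta in J. rewrite J. reflexivity.
Qed.

Lemma iface_true J0 J1 J2 m xi0 xi1 bm bp cs c : TS J0 -> TS J1 -> TS J2 -> (1 <= m)%nat ->
  interface_conds m xi0 xi1 bm bp J0 J1 J2 (Wr m (Pr m c)) (Wr m (Pr m cs)) <-> Core J0 J1 J2 m xi0 xi1 bp bm cs c.
Proof. intros H0 H1 H2 Hm.
assert (Key : forall j v, is_poly1 (m - 2 - j) v ->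
  RInt (fun x => v x * jump_beta bm bp (fun u e x' => Derive_n (fun t => Lop J0 J1 J2 u t x') j e) (Wr m (Pr m c)) (Wr m (Pr m cs)) x) xi0 xi1
  = - RInt (fun x => v x * (bm * Fr J0 J1 J2 m j (Pr m c) x - bp * Fr J0 J1 J2 m j (Pr m cs) x)) xi0 xi1).
{ intros j v Hv.
  transitivity (RInt (fun x => v x * (bp * Fr J0 J1 J2 m j (Pr m cs) x - bm * Fr J0 J1 J2 m j (Pr m c) x)) xi0 xi1).
  { f_equal. apply functional_extensionality; intro x. f_equal.
    pose proof (jump3 J0 J1 J2 m bm bp j c cs H0 H1 H2) as J. apply (f_equal (fun f => f x)) in J. cbv beta in J. rewrite J. reflexivity. }
  rewrite (RI_ext _ (fun x => (-1) * (v x * (bm * Fr J0 J1 J2 m j (Pr m c) x - bp * Fr J0 J1 J2 m j (Pr m cs) x)))).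
  rewrite RI_scal. match goal with |- ?A = ?B => change (@eq R A B) end. ring. apply cont_mult. apply (poly1_cont _ _ Hv).
  apply cont_minus; apply cont_scal; apply Fr_cont'; auto; apply rows_P.
  intros x; ring. }
unfold interface_conds, Core. split; intros [A [B C]]; split; [| split | |split].
- intros x Hx. pose proof (A x Hx). rewrite !Wr_0 in H. unfold Pr in H. lra.
- intros x Hx. pose proof (B x Hx). unfold jump_beta in H. rewrite !Wr_1 in H by (auto; apply rows_P). unfold Pr in H. lra.
- intros j Hj v Hv. pose proof (C j Hj v Hv) as E. rewrite Key in E by auto. lra.
- intros x Hx. rewrite !Wr_0. unfold Pr. rewrite A; auto. ring.
- intros x Hx. unfold jump_beta. rewrite !Wr_1 by (auto; apply rows_P). unfold Pr. rewrite B; auto. ring.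
- intros j Hj v Hv. rewrite Key by auto. rewrite (C j Hj v Hv). match goal with |- ?A = ?B => change (@eq R A B) end. ring.
Qed.

Theorem lemma2 (m : nat) (Hm : (1 <= m)%nat) (xi0 xi1 : R) (Hxi : xi0 < xi1)
  (betam betap : R) (Hbm : 0 < betam) (Hbp : 0 < betap)
  (J0 J1 J2 : R -> R -> R)
  (HJ0 : smooth2 J0) (HJ1 : smooth2 J1) (HJ2 : smooth2 J2)
  (s : bool) (phis : R -> R -> R) (Hphis : is_poly2 m phis) :
  exists! phis' : R -> R -> R,
    is_poly2 m phis' /\
    interface_conds m xi0 xi1 betam betap J0 J1 J2
      (fst (pieces s phis phis')) (snd (pieces s phis phis')).
Proof.
apply smooth2_TS in HJ0, HJ1, HJ2.
destruct Hphis as [cs Hcs]. rewrite (poly2_W m cs phis Hcs).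
destruct s; simpl.
- destruct (exist_core J0 J1 J2 m xi0 xi1 betap betam cs HJ0 HJ1 HJ2 Hm Hxi Hbp Hbm) as [c Hc].
  exists (Wr m (Pr m c)). split.
  + split. apply W_poly2. apply iface_true; auto.
  + intros phi' [[c' Hc'] Hi]. rewrite (poly2_W m c' phi' Hc') in Hi |- *.
    apply iface_true in Hi; auto. apply (uniq_core J0 J1 J2 m xi0 xi1 betap betam cs); auto.
- destruct (exist_core J0 J1 J2 m xi0 xi1 betam betap cs HJ0 HJ1 HJ2 Hm Hxi Hbm Hbp) as [c Hc].
  exists (Wr m (Pr m c)). split.
  + split. apply W_poly2. apply iface_false; auto.
  + intros phi' [[c' Hc'] Hi]. rewrite (poly2_W m c' phi' Hc') in Hi |- *.
    apply iface_false in Hi; auto. apply (uniq_core J0 J1 J2 m xi0 xi1 betam betap cs); auto.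
Qed.
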